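(* Let $\mathfrak{R}$ be a $3$-torsion free prime alternative ring containing a nontrivial idempotent $e_1$. Then every multiplicative Lie $3$-derivation $\mathcal{D}$ of $\mathfrak{R}$ is almost additive, i.e. $\mathcal{D}(a+b)-\mathcal{D}(a)-\mathcal{D}(b)\in\mathcal{Z}(\mathfrak{R})$ for all $a,b\in\mathfrak{R}$.
   Context: Rings are not assumed associative or unital. $\mathfrak{R}$ is alternative if $(x,x,y)=0=(y,x,x)$ for all $x,y$, where $(x,y,z)=(xy)z-x(yz)$; it is $3$-torsion free if $3x=0$ implies $x=0$; it is prime if $\mathfrak{A}\mathfrak{B}\ne0$ for any two nonzero ideals $\mathfrak{A},\mathfrak{B}$. $[x,y]=xy-yx$; $\mathcal{Z}(\mathfrak{R})=\{r: [r,x]=0\ \forall x\in\mathfrak{R}\}$. A map $\mathcal{D}\colon\mathfrak{R}\to\mathfrak{R}$, not necessarily additive, is a multiplicative Lie $3$-derivation if $\mathcal{D}([[x,y],w])=[[\mathcal{D}(x),y],w]+[[x,\mathcal{D}(y)],w]+[[x,y],\mathcal{D}(w)]$ for all $x,y,w\in\mathfrak{R}$. A nontrivial idempotent is $e_1\ne0$ with $e_1^2=e_1$ which is not a multiplicative identity. *)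

(* Defs.v *)
(* A (not necessarily associative, not necessarily unital)
   ring is an additive abelian group (zmodType) R with a biadditive
   multiplication mul : R -> R -> R. *)
From mathcomp Require Import all_boot all_algebra.
Set Implicit Arguments. Unset Strict Implicit. Unset Printing Implicit Defensive.
Import GRing.Theory.
Local Open Scope ring_scope.

Section NonAssoc.
Variables (R : zmodType) (mul : R -> R -> R).

Definition biadditive : Prop :=
  (forall x y z, mul (x + y) z = mul x z + mul y z) /\
  (forall x y z, mul x (y + z) = mul x y + mul x z).

Definition associator (x y z : R) : R := mul (mul x y) z - mul x (mul y z).

Definition alternative : Prop :=
  forall x y, associator x x y = 0 /\ associator y x x = 0.

Definition three_torsion_free : Prop := forall x : R, x *+ 3 = 0 -> x = 0.

Definition is_ideal (A : R -> Prop) : Prop :=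
  A 0 /\ (forall x y, A x -> A y -> A (x - y)) /\
  (forall r x, A x -> A (mul r x) /\ A (mul x r)).

Definition nonzero_set (A : R -> Prop) : Prop := exists x, A x /\ x <> 0.

(* AB <> 0 : the additive subgroup generated by the products ab is nonzero,
   i.e. some product ab with a in A, b in B is nonzero. *)
Definition prime_ring : Prop :=
  forall A B : R -> Prop, is_ideal A -> is_ideal B ->
    nonzero_set A -> nonzero_set B ->
    exists a b, A a /\ B b /\ mul a b <> 0.

Definition comm (x y : R) : R := mul x y - mul y x.

Definition in_center (r : R) : Prop := forall x, comm r x = 0.

Definition is_mult_identity (e : R) : Prop :=
  forall x, mul e x = x /\ mul x e = x.

Definition nontrivial_idempotent (e : R) : Prop :=
  e <> 0 /\ mul e e = e /\ ~ is_mult_identity e.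

Definition mult_Lie3_derivation (D : R -> R) : Prop :=
  forall x y w,
    D (comm (comm x y) w) =
      comm (comm (D x) y) w + comm (comm x (D y)) w + comm (comm x y) (D w).

End NonAssoc.

(* Main.v *)
Require Import Defs.
From mathcomp Require Import all_boot all_algebra.
Set Implicit Arguments. Unset Strict Implicit. Unset Printing Implicit Defensive.
Import GRing.Theory.
Local Open Scope ring_scope.

Module ZN.
Inductive ex : Type := V of nat | Z0 | Ad of ex & ex | Op of ex.
Section E.
Variable T : zmodType.
Fixpoint ev (env : seq T) (e : ex) : T := match e with
 | V n => nth 0 env n | Z0 => 0 | Ad a b => ev env a + ev env b | Op a => - ev env a end.
Fixpoint cf (e : ex) (n : nat) : int := match e with
 | V m => if m == n then 1 else 0 | Z0 => 0 | Ad a b => cf a n + cf b n | Op a => - cf a n end.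
Fixpoint nfs (env : seq T) (k : nat) (c : nat -> int) : T :=
  match env with [::] => 0 | x :: env' => x *~ c k + nfs env' k.+1 c end.
Lemma nfsD env k c1 c2 : nfs env k (fun i => c1 i + c2 i) = nfs env k c1 + nfs env k c2.
Proof.
elim: env k => [|x env IH] k /=; first by rewrite addr0.
by rewrite IH mulrzDr addrACA.
Qed.
Lemma nfsN env k c : nfs env k (fun i => - c i) = - nfs env k c.
Proof. elim: env k => [|x env IH] k /=; first by rewrite oppr0.
by rewrite IH mulrNz opprD. Qed.
Lemma nfs0 env k : nfs env k (fun _ => 0) = 0.
Proof. elim: env k => [|x env IH] k //=. by rewrite IH mulr0z addr0. Qed.
Lemma nfsV env k n : nfs env k (fun i => if n == i then 1 else 0) =
   if (k <= n)%N then nth 0 env (n - k) else 0.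
Proof.
elim: env k => [|x env IH] k /=.
  by case: ifP => // _; rewrite nth_nil.
rewrite IH. case: (ltngtP k n) => [lt|gt|->].
- by rewrite mulr0z add0r -(subnSK lt).
- by rewrite mulr0z addr0.
- by rewrite mulr1z addr0 subnn.
Qed.
Lemma ev_nfs env e k : (k = 0)%N -> ev env e = nfs env k (cf e).
Proof.
move=> ->. elim: e => [n||a IHa b IHb|a IHa] /=.
- rewrite nfsV subn0 /=. done.
- by rewrite nfs0.
- by rewrite nfsD IHa IHb.
- by rewrite nfsN IHa.
Qed.
Lemma nfs_ext env k c1 c2 : all (fun i => c1 i == c2 i) (iota k (size env)) -> nfs env k c1 = nfs env k c2.
Proof.
elim: env k => [|x env IH] k //= /andP[/eqP -> H]. by rewrite (IH _ H).
Qed.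
Lemma ev_eq env e1 e2 : all (fun i => cf e1 i == cf e2 i) (iota 0 (size env)) -> ev env e1 = ev env e2.
Proof. move=> H. rewrite (ev_nfs env e1 (erefl 0%N)) (ev_nfs env e2 (erefl 0%N)). exact: nfs_ext. Qed.
End E.
End ZN.

Ltac zn_in t env := lazymatch env with
 | nil => constr:(false)
 | cons t _ => constr:(true)
 | cons _ ?e => zn_in t e
end.
Ltac zn_find t env := lazymatch env with
 | cons t _ => constr:(0%N)
 | cons _ ?e => let n := zn_find t e in constr:(S n)
end.
Ltac zn_collect t env := lazymatch t with
 | @GRing.add _ ?a ?b => let e1 := zn_collect a env in zn_collect b e1
 | @GRing.opp _ ?a => zn_collect a env
 | @GRing.zero _ => env
 | _ => let b := zn_in t env in lazymatch b with true => env | false => constr:(cons t env) end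
end.
Ltac zn_reify t env := lazymatch t with
 | @GRing.add _ ?a ?b => let ra := zn_reify a env in let rb := zn_reify b env in constr:(ZN.Ad ra rb)
 | @GRing.opp _ ?a => let ra := zn_reify a env in constr:(ZN.Op ra)
 | @GRing.zero _ => constr:(ZN.Z0)
 | _ => let n := zn_find t env in constr:(ZN.V n)
end.
Ltac zmodr := lazymatch goal with |- @eq ?T ?l ?r =>
 let env := zn_collect l (@nil T) in let env := zn_collect r env in
 let rl := zn_reify l env in let rr := zn_reify r env in
 change (ZN.ev env rl = ZN.ev env rr); apply ZN.ev_eq; vm_compute; reflexivity end.

Ltac lin h := apply/subr0_eq;
  lazymatch type of h with ?H1 = ?H2 =>
    first [ transitivity (H1 - H2); [zmodr | by rewrite h subrr]
          | transitivity (H2 - H1); [zmodr | by rewrite h subrr] ] end.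

Definition op (R : zmodType) (mul : R -> R -> R) : R -> R -> R := fun x y => mul y x.

Section Basic.
Variables (R : zmodType) (mul : R -> R -> R).
Hypothesis Hbi : biadditive mul.
Hypothesis Halt : alternative mul.
Local Notation "x ⊙ y" := (mul x y) (at level 40, left associativity).
Local Notation A := (associator mul).

Lemma mulDl x y z : (x + y) ⊙ z = x ⊙ z + y ⊙ z. Proof. exact: Hbi.1. Qed.
Lemma mulDr x y z : x ⊙ (y + z) = x ⊙ y + x ⊙ z. Proof. exact: Hbi.2. Qed.
Lemma mul0l x : 0 ⊙ x = 0.
Proof. have h := mulDl 0 0 x; rewrite addr0 in h. apply: (addrI (0 ⊙ x)). by rewrite -h addr0. Qed.
Lemma mul0r x : x ⊙ 0 = 0.
Proof. have h := mulDr x 0 0; rewrite addr0 in h. apply: (addrI (x ⊙ 0)). by rewrite -h addr0. Qed.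
Lemma mulNl x y : (- x) ⊙ y = - (x ⊙ y).
Proof. apply: (addrI (x ⊙ y)). by rewrite -mulDl !subrr mul0l. Qed.
Lemma mulNr x y : x ⊙ (- y) = - (x ⊙ y).
Proof. apply: (addrI (x ⊙ y)). by rewrite -mulDr !subrr mul0r. Qed.

Local Ltac dist := repeat progress rewrite ?mulDl ?mulDr ?mulNl ?mulNr ?mul0l ?mul0r.

Lemma A_xxy x y : A x x y = 0. Proof. exact: (Halt x y).1. Qed.
Lemma A_yxx x y : A y x x = 0. Proof. exact: (Halt x y).2. Qed.

Lemma A_swap12 x y z : A x y z = - A y x z.
Proof.
have h := A_xxy (x + y) z; have h1 := A_xxy x z; have h2 := A_xxy y z.
have hh := f_equal2 (fun a b => a - b) (f_equal2 (fun a b => a - b) h h1) h2.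
move: hh; rewrite /associator; dist => hh.
rewrite /associator; dist; lin hh.
Qed.

Lemma A_swap23 x y z : A x y z = - A x z y.
Proof.
have h := A_yxx (y + z) x; have h1 := A_yxx y x; have h2 := A_yxx z x.
have hh := f_equal2 (fun a b => a - b) (f_equal2 (fun a b => a - b) h h1) h2.
move: hh; rewrite /associator; dist => hh.
rewrite /associator; dist; lin hh.
Qed.

Lemma A_cyc x y z : A x y z = A y z x.
Proof. by rewrite A_swap12 A_swap23 opprK. Qed.

Lemma A_flex x y : A x y x = 0.
Proof. by rewrite A_swap12 A_yxx oppr0. Qed.

Lemma teich w x y z : A (w ⊙ x) y z - A w (x ⊙ y) z + A w x (y ⊙ z) = w ⊙ A x y z + A w x y ⊙ z.
Proof. rewrite /associator; dist; zmodr. Qed.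

Lemma lmoufang x a y : ((x ⊙ a) ⊙ x) ⊙ y = x ⊙ (a ⊙ (x ⊙ y)).
Proof.
have T1 := teich x x a y. have T2 := teich x x y a.
rewrite !A_xxy !mul0l in T1 T2.
rewrite (A_swap23 (x ⊙ x) y a) (A_swap23 x y a) mulNr in T2.
apply/subr0_eq.
transitivity (A (x ⊙ a) x y + A x a (x ⊙ y)).
  by rewrite /associator; zmodr.
rewrite (A_swap12 (x ⊙ a)) (A_swap23 x a).
have hh := f_equal2 (fun a b => a + b) T1 T2.
lin hh.
Qed.

End Basic.

Set Default Proof Using "All".

Lemma op_bi (R : zmodType) (mul : R -> R -> R) : biadditive mul -> biadditive (op mul).
Proof. move=> [h1 h2]; split=> x y z; rewrite /op; [exact: h2 | exact: h1]. Qed.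

Lemma op_assoc (R : zmodType) (mul : R -> R -> R) x y z :
  associator (op mul) x y z = - associator mul z y x.
Proof. by rewrite /associator /op opprB. Qed.

Lemma op_alt (R : zmodType) (mul : R -> R -> R) : alternative mul -> alternative (op mul).
Proof.
move=> h x y; rewrite (op_assoc mul x x y) (op_assoc mul y x x); split.
- by rewrite (h x y).2 oppr0.
- by rewrite (h x y).1 oppr0.
Qed.

Section Basic2.
Variables (R : zmodType) (mul : R -> R -> R).
Hypothesis Hbi : biadditive mul.
Hypothesis Halt : alternative mul.
Local Notation "x ⊙ y" := (mul x y) (at level 40, left associativity).
Local Notation A := (associator mul).
Local Ltac dist := repeat progress rewrite ?(mulDl Hbi) ?(mulDr Hbi) ?(mulNl Hbi) ?(mulNr Hbi) ?(mul0l Hbi) ?(mul0r Hbi).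

Lemma flexE x y : (x ⊙ y) ⊙ x = x ⊙ (y ⊙ x).
Proof. have h := A_flex Hbi Halt x y. rewrite /associator in h. exact: subr0_eq h. Qed.

Lemma rmoufang x a y : y ⊙ ((x ⊙ a) ⊙ x) = ((y ⊙ x) ⊙ a) ⊙ x.
Proof. have := lmoufang (op_bi Hbi) (op_alt Halt) x a y. rewrite /op => <-. by rewrite flexE. Qed.

Lemma lalt x y : (x ⊙ x) ⊙ y = x ⊙ (x ⊙ y).
Proof. have h := A_xxy Halt x y. rewrite /associator in h. exact: subr0_eq h. Qed.
Lemma ralt x y : (y ⊙ x) ⊙ x = y ⊙ (x ⊙ x).
Proof. have h := A_yxx Halt x y. rewrite /associator in h. exact: subr0_eq h. Qed.

Lemma assocE x y z : (x ⊙ y) ⊙ z = x ⊙ (y ⊙ z) + A x y z.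
Proof. rewrite /associator. zmodr. Qed.

Lemma prod3_0 p q r : q ⊙ r = 0 -> r ⊙ p = 0 -> (p ⊙ q) ⊙ r = 0.
Proof.
move=> h1 h2. rewrite assocE h1 (mul0r Hbi) add0r (A_cyc Hbi Halt).
by rewrite /associator h1 h2 (mul0l Hbi) (mul0r Hbi) subrr.
Qed.

Definition Jf x y z := A x y z - A x z y + A z x y.
Lemma Jid x y z : comm mul (x ⊙ y) z - x ⊙ comm mul y z - comm mul x z ⊙ y = Jf x y z.
Proof. rewrite /Jf /comm /associator; dist; zmodr. Qed.
Lemma Jswap x y z : Jf y x z = - Jf x y z.
Proof.
rewrite /Jf (A_swap12 Hbi Halt y x z) -(A_cyc Hbi Halt x y z) (A_swap23 Hbi Halt z y x).
rewrite (A_swap23 Hbi Halt x z y) !(A_cyc Hbi Halt z x y).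
zmodr.
Qed.
Lemma J0 x y z : A x y z = 0 -> Jf x y z = 0.
Proof.
move=> h. rewrite /Jf (A_swap23 Hbi Halt x z y) (A_cyc Hbi Halt z x y) h.
zmodr.
Qed.

End Basic2.

Section Peirce.
Variables (R : zmodType) (mul : R -> R -> R).
Hypothesis Hbi : biadditive mul.
Hypothesis Halt : alternative mul.
Variable e : R.
Hypothesis He : mul e e = e.
Local Notation "x ⊙ y" := (mul x y) (at level 40, left associativity).
Local Notation A := (associator mul).
Local Ltac dist := repeat progress rewrite ?(mulDl Hbi) ?(mulDr Hbi) ?(mulNl Hbi) ?(mulNr Hbi) ?(mul0l Hbi) ?(mul0r Hbi).

Definition P11 x := e ⊙ x = x /\ x ⊙ e = x.
Definition P12 x := e ⊙ x = x /\ x ⊙ e = 0.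
Definition P21 x := e ⊙ x = 0 /\ x ⊙ e = x.
Definition P22 x := e ⊙ x = 0 /\ x ⊙ e = 0.

Lemma I2 x y : e ⊙ (x ⊙ y) = (x ⊙ e) ⊙ y + (e ⊙ x) ⊙ y - x ⊙ (e ⊙ y).
Proof. have h := A_swap12 Hbi Halt x e y. move: h; rewrite /associator => h. lin h. Qed.
Lemma I3 x y : (x ⊙ y) ⊙ e = x ⊙ (y ⊙ e) + x ⊙ (e ⊙ y) - (x ⊙ e) ⊙ y.
Proof. have h := A_swap23 Hbi Halt x y e. move: h; rewrite /associator => h. lin h. Qed.

Lemma eeL x : e ⊙ (e ⊙ x) = e ⊙ x. Proof. by rewrite -(lalt Hbi Halt) He. Qed.
Lemma eeR x : (x ⊙ e) ⊙ e = x ⊙ e. Proof. by rewrite (ralt Hbi Halt) He. Qed.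
Lemma eflex x : (e ⊙ x) ⊙ e = e ⊙ (x ⊙ e). Proof. exact: (flexE Hbi Halt). Qed.

Local Ltac pfin a1 a2 b1 b2 := split; [rewrite I2 | rewrite I3]; rewrite ?a1 ?a2 ?b1 ?b2; dist; zmodr.

Lemma m11_11 a b : P11 a -> P11 b -> P11 (a ⊙ b). Proof. move=> [a1 a2] [b1 b2]; pfin a1 a2 b1 b2. Qed.
Lemma m11_12 a b : P11 a -> P12 b -> P12 (a ⊙ b). Proof. move=> [a1 a2] [b1 b2]; pfin a1 a2 b1 b2. Qed.
Lemma m12_12 a b : P12 a -> P12 b -> P21 (a ⊙ b). Proof. move=> [a1 a2] [b1 b2]; pfin a1 a2 b1 b2. Qed.
Lemma m12_21 a b : P12 a -> P21 b -> P11 (a ⊙ b). Proof. move=> [a1 a2] [b1 b2]; pfin a1 a2 b1 b2. Qed.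
Lemma m12_22 a b : P12 a -> P22 b -> P12 (a ⊙ b). Proof. move=> [a1 a2] [b1 b2]; pfin a1 a2 b1 b2. Qed.
Lemma m21_11 a b : P21 a -> P11 b -> P21 (a ⊙ b). Proof. move=> [a1 a2] [b1 b2]; pfin a1 a2 b1 b2. Qed.
Lemma m21_12 a b : P21 a -> P12 b -> P22 (a ⊙ b). Proof. move=> [a1 a2] [b1 b2]; pfin a1 a2 b1 b2. Qed.
Lemma m21_21 a b : P21 a -> P21 b -> P12 (a ⊙ b). Proof. move=> [a1 a2] [b1 b2]; pfin a1 a2 b1 b2. Qed.
Lemma m22_21 a b : P22 a -> P21 b -> P21 (a ⊙ b). Proof. move=> [a1 a2] [b1 b2]; pfin a1 a2 b1 b2. Qed.
Lemma m22_22 a b : P22 a -> P22 b -> P22 (a ⊙ b). Proof. move=> [a1 a2] [b1 b2]; pfin a1 a2 b1 b2. Qed.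

Lemma m11_21 a b : P11 a -> P21 b -> a ⊙ b = 0.
Proof. move=> [a1 a2] [b1 b2]. have := lmoufang Hbi Halt e a b. rewrite a1 a2 b1 !(mul0r Hbi). done. Qed.
Lemma m11_22 a b : P11 a -> P22 b -> a ⊙ b = 0.
Proof. move=> [a1 a2] [b1 b2]. have := lmoufang Hbi Halt e a b. rewrite a1 a2 b1 !(mul0r Hbi). done. Qed.
Lemma m12_11 a b : P12 a -> P11 b -> a ⊙ b = 0.
Proof. move=> [a1 a2] [b1 b2]. have := rmoufang Hbi Halt e b a. rewrite b1 b2 a2 !(mul0l Hbi). done. Qed.
Lemma m22_11 a b : P22 a -> P11 b -> a ⊙ b = 0.
Proof. move=> [a1 a2] [b1 b2]. have := rmoufang Hbi Halt e b a. rewrite b1 b2 a2 !(mul0l Hbi). done. Qed.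
Lemma m22_12 a b : P22 a -> P12 b -> a ⊙ b = 0.
Proof.
move=> [a1 a2] [b1 b2]. have := lmoufang Hbi Halt e a b. rewrite a1 b1 !(mul0l Hbi) => h.
have := I2 a b. rewrite -h a1 a2 b1 !(mul0l Hbi) !add0r => /esym/eqP. by rewrite oppr_eq0 => /eqP.
Qed.
Lemma m21_22 a b : P21 a -> P22 b -> a ⊙ b = 0.
Proof.
move=> [a1 a2] [b1 b2]. have := rmoufang Hbi Halt e b a. rewrite b1 a2 !(mul0l Hbi) (mul0r Hbi) => h.
have := I3 a b. rewrite -h b1 b2 a2 !(mul0r Hbi) !add0r => /esym/eqP. by rewrite oppr_eq0 => /eqP.
Qed.

Lemma sq12 a : P12 a -> a ⊙ a = 0.
Proof.
move=> ha. have [_ h2] := m12_12 ha ha. rewrite -h2 (lalt Hbi Halt). by case: ha => _ ->; rewrite (mul0r Hbi).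
Qed.
Lemma sq21 a : P21 a -> a ⊙ a = 0.
Proof.
move=> ha. have [h1 _] := m21_21 ha ha. rewrite -h1 -(ralt Hbi Halt). by case: ha => -> _; rewrite (mul0l Hbi).
Qed.

Lemma P11_0 : P11 0. Proof. by split; rewrite ?(mul0l Hbi) ?(mul0r Hbi). Qed.
Lemma P12_0 : P12 0. Proof. by split; rewrite ?(mul0l Hbi) ?(mul0r Hbi). Qed.
Lemma P21_0 : P21 0. Proof. by split; rewrite ?(mul0l Hbi) ?(mul0r Hbi). Qed.
Lemma P22_0 : P22 0. Proof. by split; rewrite ?(mul0l Hbi) ?(mul0r Hbi). Qed.
Local Ltac clos a1 a2 b1 b2 := split; dist; rewrite ?a1 ?a2 ?b1 ?b2; zmodr.
Local Ltac closN a1 a2 := split; dist; rewrite ?a1 ?a2; zmodr.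
Lemma P11_add a b : P11 a -> P11 b -> P11 (a + b). Proof. move=> [a1 a2] [b1 b2]; clos a1 a2 b1 b2. Qed.
Lemma P12_add a b : P12 a -> P12 b -> P12 (a + b). Proof. move=> [a1 a2] [b1 b2]; clos a1 a2 b1 b2. Qed.
Lemma P21_add a b : P21 a -> P21 b -> P21 (a + b). Proof. move=> [a1 a2] [b1 b2]; clos a1 a2 b1 b2. Qed.
Lemma P22_add a b : P22 a -> P22 b -> P22 (a + b). Proof. move=> [a1 a2] [b1 b2]; clos a1 a2 b1 b2. Qed.
Lemma P11_opp a : P11 a -> P11 (- a). Proof. move=> [a1 a2]; closN a1 a2. Qed.
Lemma P12_opp a : P12 a -> P12 (- a). Proof. move=> [a1 a2]; closN a1 a2. Qed.
Lemma P21_opp a : P21 a -> P21 (- a). Proof. move=> [a1 a2]; closN a1 a2. Qed.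
Lemma P22_opp a : P22 a -> P22 (- a). Proof. move=> [a1 a2]; closN a1 a2. Qed.

Definition c11 x := (e ⊙ x) ⊙ e.
Definition c12 x := e ⊙ x - (e ⊙ x) ⊙ e.
Definition c21 x := x ⊙ e - (e ⊙ x) ⊙ e.
Definition c22 x := x - e ⊙ x - x ⊙ e + (e ⊙ x) ⊙ e.

Local Ltac esimp := repeat progress rewrite ?eflex ?eeL ?eeR.
Lemma c11P x : P11 (c11 x).
Proof. rewrite /c11; split; dist; esimp; zmodr. Qed.
Lemma c12P x : P12 (c12 x).
Proof. rewrite /c12; split; dist; esimp; zmodr. Qed.
Lemma c21P x : P21 (c21 x).
Proof. rewrite /c21; split; dist; esimp; zmodr. Qed.
Lemma c22P x : P22 (c22 x).
Proof. rewrite /c22; split; dist; esimp; zmodr. Qed.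
Lemma cdec x : x = c11 x + c12 x + c21 x + c22 x.
Proof. rewrite /c11 /c12 /c21 /c22. zmodr. Qed.

Lemma sep11_22 u v : P11 u -> P22 v -> u + v = 0 -> u = 0 /\ v = 0.
Proof.
move=> [u1 u2] [v1 v2] h. have : e ⊙ (u + v) = 0 by rewrite h (mul0r Hbi).
rewrite (mulDr Hbi) u1 v1 addr0 => hu. split=> //. by move: h; rewrite hu add0r.
Qed.
Lemma sep12_21 u v : P12 u -> P21 v -> u + v = 0 -> u = 0 /\ v = 0.
Proof.
move=> [u1 u2] [v1 v2] h. have : e ⊙ (u + v) = 0 by rewrite h (mul0r Hbi).
rewrite (mulDr Hbi) u1 v1 addr0 => hu. split=> //. by move: h; rewrite hu add0r.
Qed.

Lemma comm12e r : P12 r -> comm mul r e = - r.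
Proof. move=> [h1 h2]. by rewrite /comm h1 h2 add0r. Qed.
Lemma comm21e r : P21 r -> comm mul r e = r.
Proof. move=> [h1 h2]. by rewrite /comm h1 h2 subr0. Qed.
Lemma comm11e r : P11 r -> comm mul r e = 0.
Proof. move=> [h1 h2]. by rewrite /comm h1 h2 subrr. Qed.
Lemma comm22e r : P22 r -> comm mul r e = 0.
Proof. move=> [h1 h2]. by rewrite /comm h1 h2 subrr. Qed.

Lemma commxe x : comm mul x e = c21 x - c12 x.
Proof. rewrite /comm /c21 /c12. zmodr. Qed.
Lemma Pform x : comm mul (comm mul x e) e = c12 x + c21 x.
Proof.
rewrite (commxe x). move: (c12P x) (c21P x). move: (c12 x) (c21 x) => a b [h1 h2] [h3 h4].
rewrite /comm; dist. rewrite h1 h2 h3 h4. zmodr.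
Qed.
Lemma K_of_P0 x : comm mul (comm mul x e) e = 0 -> comm mul x e = 0.
Proof.
rewrite Pform => h. have [h1 h2] := sep12_21 (c12P x) (c21P x) h.
by rewrite commxe h1 h2 subrr.
Qed.
Lemma K_split t : comm mul t e = 0 -> t = c11 t + c22 t.
Proof.
move=> h. have h' : t ⊙ e = e ⊙ t by apply/subr0_eq.
have H12 : c12 t = 0 by rewrite /c12 -h' eeR subrr.
have H21 : c21 t = 0 by rewrite /c21 -h' eeR subrr.
by rewrite {1}(cdec t) H12 H21 addr0 addr0.
Qed.

End Peirce.

Section Prime.
Variables (R : zmodType) (mul : R -> R -> R).
Hypothesis Hbi : biadditive mul.
Hypothesis Halt : alternative mul.
Hypothesis Hprime : prime_ring mul.
Variable e : R.
Hypothesis He : mul e e = e.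
Local Notation "x ⊙ y" := (mul x y) (at level 40, left associativity).
Local Notation A := (associator mul).
Local Ltac dist := repeat progress rewrite ?(mulDl Hbi) ?(mulDr Hbi) ?(mulNl Hbi) ?(mulNr Hbi) ?(mul0l Hbi) ?(mul0r Hbi).
Local Notation P11 := (P11 mul e).
Local Notation P12 := (P12 mul e).
Local Notation P21 := (P21 mul e).
Local Notation P22 := (P22 mul e).
Local Notation cyc := (A_cyc Hbi Halt).
Local Notation I2 := (I2 Hbi Halt He).
Local Notation I3 := (I3 Hbi Halt He).
Local Notation eeL := (eeL Hbi Halt He).
Local Notation eeR := (eeR Hbi Halt He).
Local Notation eflex := (eflex Hbi Halt He).
Local Notation m11_11 := (m11_11 Hbi Halt He).
Local Notation m11_12 := (m11_12 Hbi Halt He).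
Local Notation m12_12 := (m12_12 Hbi Halt He).
Local Notation m12_21 := (m12_21 Hbi Halt He).
Local Notation m12_22 := (m12_22 Hbi Halt He).
Local Notation m21_11 := (m21_11 Hbi Halt He).
Local Notation m21_12 := (m21_12 Hbi Halt He).
Local Notation m21_21 := (m21_21 Hbi Halt He).
Local Notation m22_21 := (m22_21 Hbi Halt He).
Local Notation m22_22 := (m22_22 Hbi Halt He).
Local Notation m11_21 := (m11_21 Hbi Halt He).
Local Notation m11_22 := (m11_22 Hbi Halt He).
Local Notation m12_11 := (m12_11 Hbi Halt He).
Local Notation m22_11 := (m22_11 Hbi Halt He).
Local Notation m22_12 := (m22_12 Hbi Halt He).
Local Notation m21_22 := (m21_22 Hbi Halt He).
Local Notation sq12 := (sq12 Hbi Halt He).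
Local Notation sq21 := (sq21 Hbi Halt He).
Local Notation P11_0 := (P11_0 Hbi Halt He).
Local Notation P12_0 := (P12_0 Hbi Halt He).
Local Notation P21_0 := (P21_0 Hbi Halt He).
Local Notation P22_0 := (P22_0 Hbi Halt He).
Local Notation P11_add := (P11_add Hbi Halt He).
Local Notation P12_add := (P12_add Hbi Halt He).
Local Notation P21_add := (P21_add Hbi Halt He).
Local Notation P22_add := (P22_add Hbi Halt He).
Local Notation P11_opp := (P11_opp Hbi Halt He).
Local Notation P12_opp := (P12_opp Hbi Halt He).
Local Notation P21_opp := (P21_opp Hbi Halt He).
Local Notation P22_opp := (P22_opp Hbi Halt He).
Local Notation c11P := (c11P Hbi Halt He).
Local Notation c12P := (c12P Hbi Halt He).
Local Notation c21P := (c21P Hbi Halt He).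
Local Notation c22P := (c22P Hbi Halt He).
Local Notation cdec := (cdec Hbi Halt He).
Local Notation sep11_22 := (sep11_22 Hbi Halt He).
Local Notation sep12_21 := (sep12_21 Hbi Halt He).
Local Notation comm12e := (comm12e Hbi Halt He).
Local Notation comm21e := (comm21e Hbi Halt He).
Local Notation comm11e := (comm11e Hbi Halt He).
Local Notation comm22e := (comm22e Hbi Halt He).
Local Notation commxe := (commxe Hbi Halt He).
Local Notation Pform := (Pform Hbi Halt He).
Local Notation K_of_P0 := (K_of_P0 Hbi Halt He).
Local Notation K_split := (K_split Hbi Halt He).
Local Notation assocE := (assocE Hbi Halt).

Lemma decomp4 x : exists r1 r2 r3 r4, P11 r1 /\ P12 r2 /\ P21 r3 /\ P22 r4 /\ x = r1 + r2 + r3 + r4.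
Proof.
exists (c11 mul e x), (c12 mul e x), (c21 mul e x), (c22 mul e x).
split; first exact: c11P. split; first exact: c12P. split; first exact: c21P. split; first exact: c22P.
exact: cdec.
Qed.

Lemma LA_ideal (J : R -> Prop) : is_ideal mul J -> is_ideal mul (fun x => forall j, J j -> x ⊙ j = 0).
Proof.
move=> [J0 [Jsub Jmul]]. split; first by move=> j _; rewrite (mul0l Hbi).
split.
  move=> x y hx hy j hj. by rewrite (mulDl Hbi) (mulNl Hbi) hx // hy // subrr.
move=> r x hx; split=> j hj.
- have hjr : J (j ⊙ r) by apply: (Jmul _ _ hj).2.
  rewrite assocE (hx j hj) (mul0r Hbi) add0r cyc /associator (hx j hj) (mul0l Hbi).
  by rewrite (hx _ hjr) subrr.
- have hjr : J (j ⊙ r) by apply: (Jmul _ _ hj).2.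
  have hrj : J (r ⊙ j) by apply: (Jmul _ _ hj).1.
  rewrite assocE (A_swap12 Hbi Halt) cyc /associator (hx j hj) (mul0l Hbi) (hx _ hjr) (hx _ hrj).
  by rewrite subrr oppr0 addr0.
Qed.

Lemma prime_ann (AA BB : R -> Prop) : is_ideal mul AA -> is_ideal mul BB ->
  (forall a b, AA a -> BB b -> a ⊙ b = 0) -> (exists b, BB b /\ b <> 0) -> forall a, AA a -> a = 0.
Proof.
move=> hA hB hAB hBn a Aa. case: (eqVneq a 0) => // /eqP an0.
have [a' [b' [Aa' [Bb' hne]]]] := Hprime hA hB (ex_intro _ a (conj Aa an0)) hBn.
by case: hne; apply: hAB.
Qed.

Definition V11 d := P11 d /\ (forall x, P12 x -> d ⊙ x = 0) /\ (forall y, P21 y -> y ⊙ d = 0).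

Lemma V11_l s d : P11 s -> V11 d -> V11 (s ⊙ d).
Proof.
move=> hs [hd [hx hy]]; split; first exact: m11_11.
split=> [x px|y py].
- rewrite assocE hx // (mul0r Hbi) add0r cyc /associator hx // (mul0l Hbi).
  by rewrite (m12_11 px hs) (mul0r Hbi) subrr.
- have E : y ⊙ (s ⊙ d) = (y ⊙ s) ⊙ d - A y s d by rewrite /associator; zmodr.
  rewrite E hy; last exact: (m21_11 py hs).
  rewrite cyc /associator (m11_21 (m11_11 hs hd) py).
  rewrite (m11_21 hd py) (mul0r Hbi). zmodr.
Qed.

Lemma V11_r s d : P11 s -> V11 d -> V11 (d ⊙ s).
Proof.
move=> hs [hd [hx hy]]; split; first exact: m11_11.
split=> [x px|y py].
- rewrite assocE hx; last exact: (m11_12 hs px).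
  rewrite add0r cyc /associator (m12_11 (m11_12 hs px) hd).
  by rewrite (m12_11 px hd) (mul0r Hbi) subrr.
- have E : y ⊙ (d ⊙ s) = (y ⊙ d) ⊙ s - A y d s by rewrite /associator; zmodr.
  rewrite E hy // (mul0l Hbi) cyc /associator (m11_21 (m11_11 hd hs) py).
  rewrite (m11_21 hs py) (mul0r Hbi). zmodr.
Qed.

Lemma V11_ideal : is_ideal mul V11.
Proof.
split; first by split; [exact: P11_0 | split=> ? _; rewrite ?(mul0l Hbi) ?(mul0r Hbi)].
split.
  move=> a b [ha [hax hay]] [hb [hbx hby]]; split; first exact: (P11_add (ha) (P11_opp hb)).
  split=> [x px|y py]; dist; by rewrite ?hax ?hbx ?hay ?hby // subrr.
move=> r d hd. have [r1 [r2 [r3 [r4 [h1 [h2 [h3 [h4 ->]]]]]]]] := decomp4 r.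
have [pd [hx hy]] := hd.
split.
- dist. rewrite (m12_11 h2 pd) (hy r3 h3) (m22_11 h4 pd) !addr0.
  exact: V11_l.
- dist. rewrite (hx r2 h2) (m11_21 pd h3) (m11_22 pd h4) !addr0.
  exact: V11_r.
Qed.

Lemma PC1 d : ~ is_mult_identity mul e -> P11 d -> (forall x, P12 x -> d ⊙ x = 0) ->
  (forall y, P21 y -> y ⊙ d = 0) -> d = 0.
Proof.
move=> hnt pd hx hy. case: (eqVneq d 0) => // /eqP dn0. exfalso; apply: hnt.
have hV : V11 d by [].
have Z := prime_ann (LA_ideal V11_ideal) V11_ideal (fun a b ha hb => ha b hb) (ex_intro _ d (conj hV dn0)).
move=> x. have [r1 [r2 [r3 [r4 [h1 [h2 [h3 [h4 Ex]]]]]]]] := decomp4 x.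
have z2 : r2 = 0. apply: Z => v [pv _]. exact: (m12_11 h2 pv).
have z3 : r3 = 0. apply: Z => v [pv [_ hv]]. exact: hv.
have z4 : r4 = 0. apply: Z => v [pv _]. exact: (m22_11 h4 pv).
rewrite Ex z2 z3 z4 !addr0. exact: h1.
Qed.

Definition V22 d := P22 d /\ (forall x, P12 x -> x ⊙ d = 0) /\ (forall y, P21 y -> d ⊙ y = 0).

Lemma V22_l s d : P22 s -> V22 d -> V22 (s ⊙ d).
Proof.
move=> hs [hd [hx hy]]; split; first exact: m22_22.
split=> [x px|y py].
- have E : x ⊙ (s ⊙ d) = (x ⊙ s) ⊙ d - A x s d by rewrite /associator; zmodr.
  rewrite E hx; last exact: (m12_22 px hs).
  rewrite cyc /associator (m22_12 (m22_22 hs hd) px).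
  rewrite (m22_12 hd px) (mul0r Hbi). zmodr.
- rewrite assocE hy // (mul0r Hbi) add0r cyc /associator hy // (mul0l Hbi).
  by rewrite (m21_22 py hs) (mul0r Hbi) subrr.
Qed.

Lemma V22_r s d : P22 s -> V22 d -> V22 (d ⊙ s).
Proof.
move=> hs [hd [hx hy]]; split; first exact: m22_22.
split=> [x px|y py].
- have E : x ⊙ (d ⊙ s) = (x ⊙ d) ⊙ s - A x d s by rewrite /associator; zmodr.
  rewrite E hx // (mul0l Hbi) cyc /associator (m22_12 (m22_22 hd hs) px).
  rewrite (m22_12 hs px) (mul0r Hbi). zmodr.
- rewrite assocE hy; last exact: (m22_21 hs py).
  rewrite add0r cyc /associator (m21_22 (m22_21 hs py) hd).
  by rewrite (m21_22 py hd) (mul0r Hbi) subrr.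
Qed.

Lemma V22_ideal : is_ideal mul V22.
Proof.
split; first by split; [exact: P22_0 | split=> ? _; rewrite ?(mul0l Hbi) ?(mul0r Hbi)].
split.
  move=> a b [ha [hax hay]] [hb [hbx hby]]; split; first exact: (P22_add (ha) (P22_opp hb)).
  split=> [x px|y py]; dist; by rewrite ?hax ?hbx ?hay ?hby // subrr.
move=> r d hd. have [r1 [r2 [r3 [r4 [h1 [h2 [h3 [h4 ->]]]]]]]] := decomp4 r.
have [pd [hx hy]] := hd.
split.
- dist. rewrite (m11_22 h1 pd) (hx r2 h2) (m21_22 h3 pd) !add0r.
  exact: V22_l.
- dist. rewrite (m22_11 pd h1) (m22_12 pd h2) (hy r3 h3) !add0r.
  exact: V22_r.
Qed.

Lemma PC1' d : e <> 0 -> P22 d -> (forall x, P12 x -> x ⊙ d = 0) ->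
  (forall y, P21 y -> d ⊙ y = 0) -> d = 0.
Proof.
move=> hne pd hx hy. case: (eqVneq d 0) => // /eqP dn0. exfalso; apply: hne.
have hV : V22 d by [].
have Z := prime_ann (LA_ideal V22_ideal) V22_ideal (fun a b ha hb => ha b hb) (ex_intro _ d (conj hV dn0)).
apply: Z => v [pv _]. exact: (m11_22 (conj He He) pv).
Qed.

End Prime.
Section Prime2.
Variables (R : zmodType) (mul : R -> R -> R).
Hypothesis Hbi : biadditive mul.
Hypothesis Halt : alternative mul.
Hypothesis Hprime : prime_ring mul.
Variable e : R.
Hypothesis He : mul e e = e.
Local Notation "x ⊙ y" := (mul x y) (at level 40, left associativity).
Local Notation A := (associator mul).
Local Ltac dist := repeat progress rewrite ?(mulDl Hbi) ?(mulDr Hbi) ?(mulNl Hbi) ?(mulNr Hbi) ?(mul0l Hbi) ?(mul0r Hbi).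
Local Notation P11 := (P11 mul e).
Local Notation P12 := (P12 mul e).
Local Notation P21 := (P21 mul e).
Local Notation P22 := (P22 mul e).
Local Notation cyc := (A_cyc Hbi Halt).
Local Notation I2 := (I2 Hbi Halt He).
Local Notation I3 := (I3 Hbi Halt He).
Local Notation eeL := (eeL Hbi Halt He).
Local Notation eeR := (eeR Hbi Halt He).
Local Notation eflex := (eflex Hbi Halt He).
Local Notation m11_11 := (m11_11 Hbi Halt He).
Local Notation m11_12 := (m11_12 Hbi Halt He).
Local Notation m12_12 := (m12_12 Hbi Halt He).
Local Notation m12_21 := (m12_21 Hbi Halt He).
Local Notation m12_22 := (m12_22 Hbi Halt He).
Local Notation m21_11 := (m21_11 Hbi Halt He).
Local Notation m21_12 := (m21_12 Hbi Halt He).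
Local Notation m21_21 := (m21_21 Hbi Halt He).
Local Notation m22_21 := (m22_21 Hbi Halt He).
Local Notation m22_22 := (m22_22 Hbi Halt He).
Local Notation m11_21 := (m11_21 Hbi Halt He).
Local Notation m11_22 := (m11_22 Hbi Halt He).
Local Notation m12_11 := (m12_11 Hbi Halt He).
Local Notation m22_11 := (m22_11 Hbi Halt He).
Local Notation m22_12 := (m22_12 Hbi Halt He).
Local Notation m21_22 := (m21_22 Hbi Halt He).
Local Notation sq12 := (sq12 Hbi Halt He).
Local Notation sq21 := (sq21 Hbi Halt He).
Local Notation P11_0 := (P11_0 Hbi Halt He).
Local Notation P12_0 := (P12_0 Hbi Halt He).
Local Notation P21_0 := (P21_0 Hbi Halt He).
Local Notation P22_0 := (P22_0 Hbi Halt He).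
Local Notation P11_add := (P11_add Hbi Halt He).
Local Notation P12_add := (P12_add Hbi Halt He).
Local Notation P21_add := (P21_add Hbi Halt He).
Local Notation P22_add := (P22_add Hbi Halt He).
Local Notation P11_opp := (P11_opp Hbi Halt He).
Local Notation P12_opp := (P12_opp Hbi Halt He).
Local Notation P21_opp := (P21_opp Hbi Halt He).
Local Notation P22_opp := (P22_opp Hbi Halt He).
Local Notation c11P := (c11P Hbi Halt He).
Local Notation c12P := (c12P Hbi Halt He).
Local Notation c21P := (c21P Hbi Halt He).
Local Notation c22P := (c22P Hbi Halt He).
Local Notation cdec := (cdec Hbi Halt He).
Local Notation sep11_22 := (sep11_22 Hbi Halt He).
Local Notation sep12_21 := (sep12_21 Hbi Halt He).
Local Notation comm12e := (comm12e Hbi Halt He).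
Local Notation comm21e := (comm21e Hbi Halt He).
Local Notation comm11e := (comm11e Hbi Halt He).
Local Notation comm22e := (comm22e Hbi Halt He).
Local Notation commxe := (commxe Hbi Halt He).
Local Notation Pform := (Pform Hbi Halt He).
Local Notation K_of_P0 := (K_of_P0 Hbi Halt He).
Local Notation K_split := (K_split Hbi Halt He).
Local Notation assocE := (assocE Hbi Halt).

Local Notation decomp4 := (decomp4 Hbi Halt Hprime He).
Local Notation LA_ideal := (LA_ideal Hbi Halt Hprime He).
Local Notation prime_ann := (prime_ann Hbi Halt Hprime He).
Local Notation prod3_0 := (prod3_0 Hbi Halt).

Definition VV a := P12 a /\ (forall y, P21 y -> a ⊙ y = 0 /\ y ⊙ a = 0).
Definition WW b := P21 b /\ (forall x, P12 x -> b ⊙ x = 0 /\ x ⊙ b = 0).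

Lemma VV0 : VV 0.
Proof. split; first exact: P12_0. by move=> y _; rewrite (mul0l Hbi) (mul0r Hbi). Qed.
Lemma WW0 : WW 0.
Proof. split; first exact: P21_0. by move=> y _; rewrite (mul0l Hbi) (mul0r Hbi). Qed.
Lemma VVsub a b : VV a -> VV b -> VV (a - b).
Proof.
move=> [ha Ha] [hb Hb]; split; first exact: (P12_add ha (P12_opp hb)).
move=> y py; have [h1 h2] := Ha y py; have [h3 h4] := Hb y py.
by split; dist; rewrite ?h1 ?h2 ?h3 ?h4 subrr.
Qed.
Lemma WWsub a b : WW a -> WW b -> WW (a - b).
Proof.
move=> [ha Ha] [hb Hb]; split; first exact: (P21_add ha (P21_opp hb)).
move=> y py; have [h1 h2] := Ha y py; have [h3 h4] := Hb y py.
by split; dist; rewrite ?h1 ?h2 ?h3 ?h4 subrr.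
Qed.
Lemma VVadd a b : VV a -> VV b -> VV (a + b).
Proof. move=> ha hb. rewrite -[b]opprK. apply: VVsub => //. by rewrite -[- b]add0r; apply: VVsub => //; exact: VV0. Qed.
Lemma WWadd a b : WW a -> WW b -> WW (a + b).
Proof. move=> ha hb. rewrite -[b]opprK. apply: WWsub => //. by rewrite -[- b]add0r; apply: WWsub => //; exact: WW0. Qed.
Lemma VVopp a : VV a -> VV (- a).
Proof. move=> ha. rewrite -[- a]add0r. apply: VVsub => //. exact: VV0. Qed.
Lemma WWopp a : WW a -> WW (- a).
Proof. move=> ha. rewrite -[- a]add0r. apply: WWsub => //. exact: WW0. Qed.

Lemma anti12 a x : P12 a -> P12 x -> a ⊙ x = - (x ⊙ a).
Proof.
move=> ha hx. have h := sq12 (P12_add ha hx). move: h; dist. rewrite (sq12 ha) (sq12 hx) => h.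
apply/eqP; rewrite -subr_eq0 opprK; apply/eqP. rewrite -h. zmodr.
Qed.
Lemma anti21 a x : P21 a -> P21 x -> a ⊙ x = - (x ⊙ a).
Proof.
move=> ha hx. have h := sq21 (P21_add ha hx). move: h; dist. rewrite (sq21 ha) (sq21 hx) => h.
apply/eqP; rewrite -subr_eq0 opprK; apply/eqP. rewrite -h. zmodr.
Qed.

Lemma VV_l11 s a : P11 s -> VV a -> VV (s ⊙ a).
Proof.
move=> hs [ha Ha]; split; first exact: m11_12.
move=> y py. have [h1 h2] := Ha y py. have ys := m21_11 py hs.
have E1 : (s ⊙ a) ⊙ y = 0.
  rewrite assocE h1 (mul0r Hbi) add0r cyc /associator h1 (mul0l Hbi).
  by rewrite (Ha _ ys).1 subrr.
split=> //.
have E : y ⊙ (s ⊙ a) = (y ⊙ s) ⊙ a - A y s a by rewrite /associator; zmodr.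
rewrite E (Ha _ ys).2 cyc /associator E1 h1 (mul0r Hbi). zmodr.
Qed.

Lemma VV_r22 s a : P22 s -> VV a -> VV (a ⊙ s).
Proof.
move=> hs [ha Ha]; split; first exact: m12_22.
move=> y py. have [h1 h2] := Ha y py. have sy := m22_21 hs py.
have E1 : (a ⊙ s) ⊙ y = 0.
  by rewrite assocE (Ha _ sy).1 add0r cyc /associator h2 (mul0r Hbi) (Ha _ sy).2 subrr.
split=> //.
have E : y ⊙ (a ⊙ s) = (y ⊙ a) ⊙ s - A y a s by rewrite /associator; zmodr.
rewrite E h2 (mul0l Hbi) cyc /associator E1 (Ha _ sy).1. zmodr.
Qed.

Lemma VV_l12 x a : P12 x -> VV a -> WW (x ⊙ a).
Proof.
move=> hx [ha Ha]; split; first exact: m12_12.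
move=> x' hx'.
have xa := m12_12 hx ha. have ax' := m12_12 ha hx'. have x'x := m12_12 hx' hx.
have Pp : P22 ((x ⊙ a) ⊙ x') := m21_12 xa hx'.
have Pq : P11 (x ⊙ (a ⊙ x')) := m12_21 hx ax'.
have Pr : P11 (x' ⊙ (x ⊙ a)) := m12_21 hx' xa.
have Ps : P22 ((a ⊙ x') ⊙ x) := m21_12 ax' hx.
have C1 : A x a x' = A x' x a by rewrite cyc cyc.
have C2 : A x a x' = A a x' x by rewrite cyc.
rewrite /associator (Ha _ x'x).2 add0r in C1.
rewrite /associator (Ha _ x'x).1 subr0 in C2.
have e1 : x ⊙ (a ⊙ x') - x' ⊙ (x ⊙ a) + - ((x ⊙ a) ⊙ x') = 0.
  apply/eqP; rewrite -subr_eq0; apply/eqP. lin C1.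
have [hq0 hp0] := sep11_22 (P11_add Pq (P11_opp Pr)) (P22_opp Pp) e1.
have e2 : - (x ⊙ (a ⊙ x')) + ((x ⊙ a) ⊙ x' - (a ⊙ x') ⊙ x) = 0.
  apply/eqP; rewrite -subr_eq0; apply/eqP. lin C2.
have [hq _] := sep11_22 (P11_opp Pq) (P22_add Pp (P22_opp Ps)) e2.
have hq' : x ⊙ (a ⊙ x') = 0 by apply/eqP; rewrite -oppr_eq0; apply/eqP.
have hp' : (x ⊙ a) ⊙ x' = 0 by apply/eqP; rewrite -oppr_eq0; apply/eqP.
split=> //. by move: hq0; rewrite hq' add0r => /eqP; rewrite oppr_eq0 => /eqP.
Qed.

Lemma VV_r12 x a : P12 x -> VV a -> WW (a ⊙ x).
Proof. move=> hx ha. rewrite (anti12 ha.1 hx). apply: WWopp. exact: VV_l12. Qed.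

Lemma WW_r11 s b : P11 s -> WW b -> WW (b ⊙ s).
Proof.
move=> hs [hb Hb]; split; first exact: m21_11.
move=> x px. have [h1 h2] := Hb x px. have sx := m11_12 hs px.
have E0 : A b s x = 0.
  by rewrite cyc /associator (Hb _ sx).2 h2 (mul0r Hbi) subrr.
split.
- by rewrite assocE (Hb _ sx).1 add0r.
- have E : x ⊙ (b ⊙ s) = (x ⊙ b) ⊙ s - A x b s by rewrite /associator; zmodr.
  by rewrite E h2 (mul0l Hbi) cyc E0 subrr.
Qed.

Lemma WW_l22 s b : P22 s -> WW b -> WW (s ⊙ b).
Proof.
move=> hs [hb Hb]; split; first exact: m22_21.
move=> x px. have [h1 h2] := Hb x px. have xs := m12_22 px hs.
have E0 : A s b x = 0.
  by rewrite cyc /associator h1 (mul0l Hbi) (Hb _ xs).1 subrr.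
split.
- by rewrite assocE h1 (mul0r Hbi) add0r.
- have E : x ⊙ (s ⊙ b) = (x ⊙ s) ⊙ b - A x s b by rewrite /associator; zmodr.
  by rewrite E (Hb _ xs).2 cyc E0 subrr.
Qed.

Lemma WW_l21 y b : P21 y -> WW b -> VV (y ⊙ b).
Proof.
move=> hy [hb Hb]; split; first exact: m21_21.
move=> y' hy'.
have yb := m21_21 hy hb. have by' := m21_21 hb hy'. have y'y := m21_21 hy' hy.
have Pp : P11 ((y ⊙ b) ⊙ y') := m12_21 yb hy'.
have Pq : P22 (y ⊙ (b ⊙ y')) := m21_12 hy by'.
have Pr : P22 (y' ⊙ (y ⊙ b)) := m21_12 hy' yb.
have Ps : P11 ((b ⊙ y') ⊙ y) := m12_21 by' hy.
have C1 : A y b y' = A y' y b by rewrite cyc cyc.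
have C2 : A y b y' = A b y' y by rewrite cyc.
rewrite /associator (Hb _ y'y).2 add0r in C1.
rewrite /associator (Hb _ y'y).1 subr0 in C2.
have e1 : (y ⊙ b) ⊙ y' + (y' ⊙ (y ⊙ b) - y ⊙ (b ⊙ y')) = 0.
  apply/eqP; rewrite -subr_eq0; apply/eqP. lin C1.
have [hp0 hq0] := sep11_22 Pp (P22_add Pr (P22_opp Pq)) e1.
have e2 : ((y ⊙ b) ⊙ y' - (b ⊙ y') ⊙ y) + - (y ⊙ (b ⊙ y')) = 0.
  apply/eqP; rewrite -subr_eq0; apply/eqP. lin C2.
have [_ hq] := sep11_22 (P11_add Pp (P11_opp Ps)) (P22_opp Pq) e2.
have hq' : y ⊙ (b ⊙ y') = 0 by apply/eqP; rewrite -oppr_eq0; apply/eqP.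
split=> //. by move: hq0; rewrite hq' subr0.
Qed.

Lemma WW_r21 y b : P21 y -> WW b -> VV (b ⊙ y).
Proof. move=> hy hb. rewrite (anti21 hb.1 hy). apply: VVopp. exact: WW_l21. Qed.

Definition II z := exists a b, VV a /\ WW b /\ z = a + b.

Lemma II_ideal : is_ideal mul II.
Proof.
split; first by exists 0, 0; split; [exact: VV0 | split; [exact: WW0 | rewrite addr0]].
split.
  move=> z z' [a [b [ha [hb ->]]]] [a' [b' [ha' [hb' ->]]]].
  exists (a - a'), (b - b'); split; first exact: VVsub.
  split; first exact: WWsub. zmodr.
move=> r z [a [b [ha [hb ->]]]].
have [r1 [r2 [r3 [r4 [h1 [h2 [h3 [h4 ->]]]]]]]] := decomp4 r.
have [pa Ha] := ha. have [pb Hb] := hb.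
split.
- exists (r1 ⊙ a + r3 ⊙ b), (r2 ⊙ a + r4 ⊙ b).
  split; first by apply: VVadd; [exact: VV_l11 | exact: WW_l21].
  split; first by apply: WWadd; [exact: VV_l12 | exact: WW_l22].
  dist. rewrite (Ha _ h3).2 (m22_12 h4 pa) (m11_21 h1 pb) (Hb _ h2).2. zmodr.
- exists (a ⊙ r4 + b ⊙ r3), (a ⊙ r2 + b ⊙ r1).
  split; first by apply: VVadd; [exact: VV_r22 | exact: WW_r21].
  split; first by apply: WWadd; [exact: VV_r12 | exact: WW_r11].
  dist. rewrite (m12_11 pa h1) (Ha _ h3).1 (Hb _ h2).1 (m21_22 pb h4). zmodr.
Qed.

Lemma II3 i i' i'' : II i -> II i' -> II i'' -> (i ⊙ i') ⊙ i'' = 0.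
Proof.
move=> [a [b [ha [hb ->]]]] [a' [b' [ha' [hb' ->]]]] [a'' [b'' [ha'' [hb'' ->]]]].
have [pa Ha] := ha. have [pb Hb] := hb. have [pa' Ha'] := ha'. have [pb' Hb'] := hb'.
have [pa'' Ha''] := ha''. have [pb'' Hb''] := hb''.
dist. rewrite (Ha _ pb').1 (Hb _ pa').1 !(mul0l Hbi).
have w1 := VV_r12 pa' ha. have v1 := WW_r21 pb' hb.
rewrite ((w1.2) _ pa'').1 ((v1.2) _ pb'').1.
rewrite (prod3_0 (Ha' _ pb'').1 (Hb'' _ pa).1).
rewrite (prod3_0 (Hb' _ pa'').1 (Ha'' _ pb).1).
zmodr.
Qed.

Lemma PC2 m : P12 m -> (forall y, P21 y -> m ⊙ y = 0 /\ y ⊙ m = 0) -> m = 0.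
Proof.
move=> pm hm. case: (eqVneq m 0) => // /eqP mn0.
have Im : II m by exists m, 0; split; [by [] | split; [exact: WW0 | rewrite addr0]].
have nz : exists b, II b /\ b <> 0 by exists m.
have Z1 := prime_ann (LA_ideal II_ideal) II_ideal (fun a b ha hb => ha b hb) nz.
have P2 : forall i i', II i -> II i' -> i ⊙ i' = 0.
  move=> i i' hi hi'. apply: Z1 => j hj. exact: II3.
exact: (prime_ann II_ideal II_ideal P2 nz Im).
Qed.

End Prime2.

Section CommL.
Variables (R : zmodType) (mul : R -> R -> R).
Hypothesis Hbi : biadditive mul.
Hypothesis Halt : alternative mul.
Local Notation "x ⊙ y" := (mul x y) (at level 40, left associativity).
Local Notation cm := (comm mul).
Local Ltac dist := repeat progress rewrite ?(mulDl Hbi) ?(mulDr Hbi) ?(mulNl Hbi) ?(mulNr Hbi) ?(mul0l Hbi) ?(mul0r Hbi).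

Lemma commDl x y z : cm (x + y) z = cm x z + cm y z. Proof. rewrite /comm; dist; zmodr. Qed.
Lemma commDr x y z : cm x (y + z) = cm x y + cm x z. Proof. rewrite /comm; dist; zmodr. Qed.
Lemma commNl x y : cm (- x) y = - cm x y. Proof. rewrite /comm; dist; zmodr. Qed.
Lemma commNr x y : cm x (- y) = - cm x y. Proof. rewrite /comm; dist; zmodr. Qed.
Lemma comm0l x : cm 0 x = 0. Proof. rewrite /comm; dist; zmodr. Qed.
Lemma comm0r x : cm x 0 = 0. Proof. rewrite /comm; dist; zmodr. Qed.
Lemma commxx x : cm x x = 0. Proof. by rewrite /comm subrr. Qed.
Lemma commA x y : cm y x = - cm x y. Proof. rewrite /comm; zmodr. Qed.

End CommL.

Lemma op_comm (R : zmodType) (mul : R -> R -> R) x y : comm (op mul) x y = - comm mul x y.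
Proof. rewrite /comm /op. zmodr. Qed.

Lemma op_prime (R : zmodType) (mul : R -> R -> R) : prime_ring mul -> prime_ring (op mul).
Proof.
move=> hp A B [A0 [As Am]] [B0 [Bs Bm]] nA nB.
have iA : is_ideal mul A by split=> //; split=> // r x hx; have [h1 h2] := Am r x hx; split.
have iB : is_ideal mul B by split=> //; split=> // r x hx; have [h1 h2] := Bm r x hx; split.
have [b [a [hb [ha hne]]]] := hp B A iB iA nB nA.
by exists a, b.
Qed.

Lemma op_comm2 (R : zmodType) (mul : R -> R -> R) a b c : biadditive mul -> alternative mul ->
  comm (op mul) (comm (op mul) a b) c = comm mul (comm mul a b) c.
Proof. move=> hb ha. rewrite (op_comm mul (comm (op mul) a b) c) (op_comm mul a b) (commNl hb ha). by rewrite opprK. Qed.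

Lemma op_Lie3 (R : zmodType) (mul : R -> R -> R) (D : R -> R) : biadditive mul -> alternative mul ->
  mult_Lie3_derivation mul D -> mult_Lie3_derivation (op mul) D.
Proof.
move=> hb ha hD x y w.
rewrite (op_comm2 x y w hb ha) (op_comm2 (D x) y w hb ha) (op_comm2 x (D y) w hb ha) (op_comm2 x y (D w) hb ha).
exact: hD.
Qed.

Definition Tdef (R : zmodType) (D : R -> R) a b := D (a + b) - D a - D b.

Section PK.
Variables (R : zmodType) (mul : R -> R -> R).
Hypothesis Hbi : biadditive mul.
Hypothesis Halt : alternative mul.
Variable e : R.
Hypothesis He : mul e e = e.
Local Notation "x ⊙ y" := (mul x y) (at level 40, left associativity).
Local Notation A := (associator mul).
Local Notation cm := (comm mul).
Local Ltac dist := repeat progress rewrite ?(mulDl Hbi) ?(mulDr Hbi) ?(mulNl Hbi) ?(mulNr Hbi) ?(mul0l Hbi) ?(mul0r Hbi).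
Local Notation P11 := (P11 mul e).
Local Notation P12 := (P12 mul e).
Local Notation P21 := (P21 mul e).
Local Notation P22 := (P22 mul e).
Local Notation I2 := (I2 Hbi Halt He).
Local Notation I3 := (I3 Hbi Halt He).
Local Notation eeL := (eeL Hbi Halt He).
Local Notation eeR := (eeR Hbi Halt He).
Local Notation eflex := (eflex Hbi Halt He).
Local Notation m11_11 := (m11_11 Hbi Halt He).
Local Notation m11_12 := (m11_12 Hbi Halt He).
Local Notation m12_12 := (m12_12 Hbi Halt He).
Local Notation m12_21 := (m12_21 Hbi Halt He).
Local Notation m12_22 := (m12_22 Hbi Halt He).
Local Notation m21_11 := (m21_11 Hbi Halt He).
Local Notation m21_12 := (m21_12 Hbi Halt He).
Local Notation m21_21 := (m21_21 Hbi Halt He).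
Local Notation m22_21 := (m22_21 Hbi Halt He).
Local Notation m22_22 := (m22_22 Hbi Halt He).
Local Notation m11_21 := (m11_21 Hbi Halt He).
Local Notation m11_22 := (m11_22 Hbi Halt He).
Local Notation m12_11 := (m12_11 Hbi Halt He).
Local Notation m22_11 := (m22_11 Hbi Halt He).
Local Notation m22_12 := (m22_12 Hbi Halt He).
Local Notation m21_22 := (m21_22 Hbi Halt He).
Local Notation sq12 := (sq12 Hbi Halt He).
Local Notation sq21 := (sq21 Hbi Halt He).
Local Notation P11_0 := (P11_0 Hbi Halt He).
Local Notation P12_0 := (P12_0 Hbi Halt He).
Local Notation P21_0 := (P21_0 Hbi Halt He).
Local Notation P22_0 := (P22_0 Hbi Halt He).
Local Notation P11_add := (P11_add Hbi Halt He).
Local Notation P12_add := (P12_add Hbi Halt He).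
Local Notation P21_add := (P21_add Hbi Halt He).
Local Notation P22_add := (P22_add Hbi Halt He).
Local Notation P11_opp := (P11_opp Hbi Halt He).
Local Notation P12_opp := (P12_opp Hbi Halt He).
Local Notation P21_opp := (P21_opp Hbi Halt He).
Local Notation P22_opp := (P22_opp Hbi Halt He).
Local Notation c11P := (c11P Hbi Halt He).
Local Notation c12P := (c12P Hbi Halt He).
Local Notation c21P := (c21P Hbi Halt He).
Local Notation c22P := (c22P Hbi Halt He).
Local Notation cdec := (cdec Hbi Halt He).
Local Notation sep11_22 := (sep11_22 Hbi Halt He).
Local Notation sep12_21 := (sep12_21 Hbi Halt He).
Local Notation comm12e := (comm12e Hbi Halt He).
Local Notation comm21e := (comm21e Hbi Halt He).
Local Notation comm11e := (comm11e Hbi Halt He).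
Local Notation comm22e := (comm22e Hbi Halt He).
Local Notation commxe := (commxe Hbi Halt He).
Local Notation Pform := (Pform Hbi Halt He).
Local Notation K_of_P0 := (K_of_P0 Hbi Halt He).
Local Notation K_split := (K_split Hbi Halt He).

Lemma Kdec t : cm t e = 0 -> exists t1 t4, P11 t1 /\ P22 t4 /\ t = t1 + t4.
Proof. move=> h. exists (c11 mul e t), (c22 mul e t). split; first exact: c11P. split; first exact: c22P. exact: K_split. Qed.

Lemma K_comm21 t y : cm t e = 0 -> P21 y -> P21 (cm t y).
Proof.
move=> h hy. have [t1 [t4 [h1 [h4 ->]]]] := Kdec h. rewrite /comm; dist.
rewrite (m11_21 h1 hy) (m21_22 hy h4) ?add0r ?addr0 ?subr0 ?sub0r.
exact: (P21_add (m22_21 h4 hy) (P21_opp (m21_11 hy h1))).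
Qed.
Lemma K_comm12 t x : cm t e = 0 -> P12 x -> P12 (cm x t).
Proof.
move=> h hx. have [t1 [t4 [h1 [h4 ->]]]] := Kdec h. rewrite /comm; dist.
rewrite (m12_11 hx h1) (m22_12 h4 hx) ?add0r ?addr0 ?subr0 ?sub0r.
exact: (P12_add (m12_22 hx h4) (P12_opp (m11_12 h1 hx))).
Qed.
Lemma K_comm11 t s : cm t e = 0 -> P11 s -> P11 (cm s t).
Proof.
move=> h hs. have [t1 [t4 [h1 [h4 ->]]]] := Kdec h. rewrite /comm; dist.
rewrite (m11_22 hs h4) (m22_11 h4 hs) ?add0r ?addr0 ?subr0 ?sub0r.
exact: (P11_add (m11_11 hs h1) (P11_opp (m11_11 h1 hs))).
Qed.
Lemma K_comm22 t s : cm t e = 0 -> P22 s -> P22 (cm s t).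
Proof.
move=> h hs. have [t1 [t4 [h1 [h4 ->]]]] := Kdec h. rewrite /comm; dist.
rewrite (m22_11 hs h1) (m11_22 h1 hs) ?add0r ?addr0 ?subr0 ?sub0r.
exact: (P22_add (m22_22 hs h4) (P22_opp (m22_22 h4 hs))).
Qed.
Lemma comm12_21_K p q : P12 p -> P21 q -> cm (cm p q) e = 0.
Proof.
move=> hp hq. rewrite /comm -/(comm mul (p ⊙ q - q ⊙ p) e).
rewrite (commDl Hbi Halt) (commNl Hbi Halt) (comm11e (m12_21 hp hq)) (comm22e (m21_12 hq hp)). zmodr.
Qed.

End PK.

Section Lie.
Variables (R : zmodType) (mul : R -> R -> R).
Hypothesis Hbi : biadditive mul.
Hypothesis Halt : alternative mul.
Hypothesis Hprime : prime_ring mul.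
Variable e : R.
Hypothesis He : mul e e = e.
Variable D : R -> R.
Hypothesis HD : mult_Lie3_derivation mul D.
Local Notation "x ⊙ y" := (mul x y) (at level 40, left associativity).
Local Notation A := (associator mul).
Local Notation cm := (comm mul).
Local Notation T := (Tdef D).
Local Ltac dist := repeat progress rewrite ?(mulDl Hbi) ?(mulDr Hbi) ?(mulNl Hbi) ?(mulNr Hbi) ?(mul0l Hbi) ?(mul0r Hbi).
Local Notation P11 := (P11 mul e).
Local Notation P12 := (P12 mul e).
Local Notation P21 := (P21 mul e).
Local Notation P22 := (P22 mul e).
Local Notation I2 := (I2 Hbi Halt He).
Local Notation I3 := (I3 Hbi Halt He).
Local Notation eeL := (eeL Hbi Halt He).
Local Notation eeR := (eeR Hbi Halt He).
Local Notation eflex := (eflex Hbi Halt He).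
Local Notation m11_11 := (m11_11 Hbi Halt He).
Local Notation m11_12 := (m11_12 Hbi Halt He).
Local Notation m12_12 := (m12_12 Hbi Halt He).
Local Notation m12_21 := (m12_21 Hbi Halt He).
Local Notation m12_22 := (m12_22 Hbi Halt He).
Local Notation m21_11 := (m21_11 Hbi Halt He).
Local Notation m21_12 := (m21_12 Hbi Halt He).
Local Notation m21_21 := (m21_21 Hbi Halt He).
Local Notation m22_21 := (m22_21 Hbi Halt He).
Local Notation m22_22 := (m22_22 Hbi Halt He).
Local Notation m11_21 := (m11_21 Hbi Halt He).
Local Notation m11_22 := (m11_22 Hbi Halt He).
Local Notation m12_11 := (m12_11 Hbi Halt He).
Local Notation m22_11 := (m22_11 Hbi Halt He).
Local Notation m22_12 := (m22_12 Hbi Halt He).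
Local Notation m21_22 := (m21_22 Hbi Halt He).
Local Notation sq12 := (sq12 Hbi Halt He).
Local Notation sq21 := (sq21 Hbi Halt He).
Local Notation P11_0 := (P11_0 Hbi Halt He).
Local Notation P12_0 := (P12_0 Hbi Halt He).
Local Notation P21_0 := (P21_0 Hbi Halt He).
Local Notation P22_0 := (P22_0 Hbi Halt He).
Local Notation P11_add := (P11_add Hbi Halt He).
Local Notation P12_add := (P12_add Hbi Halt He).
Local Notation P21_add := (P21_add Hbi Halt He).
Local Notation P22_add := (P22_add Hbi Halt He).
Local Notation P11_opp := (P11_opp Hbi Halt He).
Local Notation P12_opp := (P12_opp Hbi Halt He).
Local Notation P21_opp := (P21_opp Hbi Halt He).
Local Notation P22_opp := (P22_opp Hbi Halt He).
Local Notation c11P := (c11P Hbi Halt He).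
Local Notation c12P := (c12P Hbi Halt He).
Local Notation c21P := (c21P Hbi Halt He).
Local Notation c22P := (c22P Hbi Halt He).
Local Notation cdec := (cdec Hbi Halt He).
Local Notation sep11_22 := (sep11_22 Hbi Halt He).
Local Notation sep12_21 := (sep12_21 Hbi Halt He).
Local Notation comm12e := (comm12e Hbi Halt He).
Local Notation comm21e := (comm21e Hbi Halt He).
Local Notation comm11e := (comm11e Hbi Halt He).
Local Notation comm22e := (comm22e Hbi Halt He).
Local Notation commxe := (commxe Hbi Halt He).
Local Notation Pform := (Pform Hbi Halt He).
Local Notation K_of_P0 := (K_of_P0 Hbi Halt He).
Local Notation K_split := (K_split Hbi Halt He).
Local Notation commDl := (commDl Hbi Halt).
Local Notation commDr := (commDr Hbi Halt).
Local Notation commNl := (commNl Hbi Halt).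
Local Notation commNr := (commNr Hbi Halt).
Local Notation comm0l := (comm0l Hbi Halt).
Local Notation comm0r := (comm0r Hbi Halt).
Local Notation commA := (commA Hbi Halt).
Local Notation Kdec := (Kdec Hbi Halt He).
Local Notation K_comm21 := (K_comm21 Hbi Halt He).
Local Notation K_comm12 := (K_comm12 Hbi Halt He).
Local Notation K_comm11 := (K_comm11 Hbi Halt He).
Local Notation K_comm22 := (K_comm22 Hbi Halt He).
Local Notation comm12_21_K := (comm12_21_K Hbi Halt He).
Local Notation PC2 := (PC2 Hbi Halt Hprime He).
Local Notation Jid := (Jid Hbi Halt).
Local Notation Jswap := (Jswap Hbi Halt).
Local Ltac cdist := repeat progress rewrite ?commDl ?commDr ?commNl ?commNr ?comm0l ?comm0r.

Lemma D0 : D 0 = 0.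
Proof. have h := HD 0 0 0. move: h. repeat progress rewrite ?comm0l ?comm0r. by rewrite !addr0. Qed.
Lemma T0r a : T a 0 = 0. Proof. by rewrite /Tdef addr0 D0 subr0 subrr. Qed.
Lemma T0l a : T 0 a = 0. Proof. by rewrite /Tdef add0r D0 subr0 subrr. Qed.

Lemma eqvF y w a b : T (cm (cm a y) w) (cm (cm b y) w) = cm (cm (T a b) y) w.
Proof.
have E : cm (cm a y) w + cm (cm b y) w = cm (cm (a + b) y) w by rewrite /comm; dist; zmodr.
rewrite /Tdef E (HD (a + b)) (HD a) (HD b) /comm; dist; zmodr.
Qed.
Lemma eqvG y w a b : T (cm (cm y w) a) (cm (cm y w) b) = cm (cm y w) (T a b).
Proof.
have E : cm (cm y w) a + cm (cm y w) b = cm (cm y w) (a + b) by rewrite /comm; dist; zmodr.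
rewrite /Tdef E (HD y w (a + b)) (HD y w a) (HD y w b) /comm; dist; zmodr.
Qed.

Lemma Kt u : P12 u -> cm (T e u) e = 0.
Proof.
move=> hu. apply: K_of_P0. rewrite -eqvF.
by rewrite (commxx Hbi Halt e) (comm0l e) (comm12e hu) (commNl u e) (comm12e hu) opprK T0l.
Qed.
Lemma Kty u y : P12 u -> P21 y -> cm (T e u) y = 0.
Proof.
move=> hu hy. have h : cm (cm (T e u) y) e = 0 by rewrite -eqvF (comm12_21_K hu hy) T0r.
have P := K_comm21 (Kt hu) hy. by rewrite -(comm21e P).
Qed.

Lemma Mixed x y : P12 x -> P21 y -> D (x + y) = D x + D y.
Proof.
move=> hx hy.
have ht : D (e + x) = D e + D x + T e x by rewrite /Tdef; zmodr.
have Kt' := Kt hx. have Ky := Kty hx hy. set t := T e x in Kt' Ky ht *. clearbody t.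
have [x1 x2] := hx. have [y1 y2] := hy.
have [xy1 xy2] := m12_21 hx hy. have [yx1 yx2] := m21_12 hy hx.
have X1 : cm (cm e (e - y)) e = y.
  rewrite /comm; dist. repeat progress rewrite ?He ?y1 ?y2 ?(mul0l Hbi) ?(mul0r Hbi). zmodr.
have X2 : cm (cm x (e - y)) e = x.
  rewrite /comm; dist.
  repeat progress rewrite ?He ?x1 ?x2 ?y1 ?y2 ?xy1 ?xy2 ?yx1 ?yx2 ?(mul0l Hbi) ?(mul0r Hbi). zmodr.
have H1 := HD e (e - y) e. rewrite X1 in H1.
have H2 := HD x (e - y) e. rewrite X2 in H2.
have Zt : cm (cm t (e - y)) e = 0.
  by rewrite (commDr t e (- y)) (commNr t y) Kt' Ky subrr comm0l.
have HX : x + y = cm (cm (e + x) (e - y)) e.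
  rewrite /comm; dist.
  repeat progress rewrite ?He ?x1 ?x2 ?y1 ?y2 ?xy1 ?xy2 ?yx1 ?yx2 ?(mul0l Hbi) ?(mul0r Hbi). zmodr.
rewrite HX (HD (e + x) (e - y) e) ht.
have hh := f_equal2 (fun p q => p - q) (f_equal2 (fun p q => p + q) H1 H2) Zt.
move: hh; rewrite /comm; dist; move=> hh. lin hh.
Qed.

Lemma K2 u x : P12 u -> P12 x -> cm (T e u) x = 0.
Proof.
move=> hu hx.
have S3 : forall y, P21 y -> cm (x ⊙ y) (T e u) + (- cm (y ⊙ x) (T e u)) = 0.
  move=> y hy. have h := eqvG x y e u. rewrite (comm12_21_K hx hy) T0l in h.
  rewrite -(commNl (y ⊙ x)) -(commDl (x ⊙ y)). exact: (esym h).
have Kt' := Kt hu. have Ky := Kty hu. set t := T e u in S3 Kt' Ky *. clearbody t.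
have S3' : forall y, P21 y -> cm (x ⊙ y) t = 0 /\ cm (y ⊙ x) t = 0.
  move=> y hy.
  have [h1 h2] := sep11_22 (K_comm11 Kt' (m12_21 hx hy)) (P22_opp (K_comm22 Kt' (m21_12 hy hx))) (S3 y hy).
  split=> //. by apply/eqP; rewrite -oppr_eq0; apply/eqP.
have Pm : P12 (cm x t) := K_comm12 Kt' hx.
have Z : cm x t = 0.
  apply: PC2 => // y hy. have [s1 s2] := S3' y hy.
  have cyt : cm y t = 0 by rewrite (commA t y) (Ky y hy) oppr0.
  have J1 := Jid x y t. rewrite s1 cyt (mul0r Hbi) in J1.
  have J2 := Jid y x t. rewrite s2 cyt (mul0l Hbi) Jswap in J2.
  have E2 : cm x t ⊙ y + y ⊙ cm x t = 0.
    have hh := f_equal2 (fun p q => p + q) J1 J2. lin hh.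
  exact: (sep11_22 (m12_21 Pm hy) (m21_12 hy Pm) E2).
by rewrite (commA x t) Z oppr0.
Qed.

Lemma Pure12 a b : P12 a -> P12 b -> D (a + b) = D a + D b.
Proof.
move=> ha hb.
have ht : D (e + a) = D e + D a + T e a by rewrite /Tdef; zmodr.
have Kt' := Kt ha. have K2' := K2 ha hb. set t := T e a in Kt' K2' ht *. clearbody t.
have [a1 a2] := ha. have [b1 b2] := hb.
have [ab1 ab2] := m12_12 ha hb. have [ba1 ba2] := m12_12 hb ha.
have X1 : cm (cm e (b - e)) (- e) = b.
  rewrite /comm; dist. repeat progress rewrite ?He ?b1 ?b2 ?(mul0l Hbi) ?(mul0r Hbi). zmodr.
have X2 : cm (cm a (b - e)) (- e) = a - cm a b.
  rewrite /comm; dist.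
  repeat progress rewrite ?He ?a1 ?a2 ?b1 ?b2 ?ab1 ?ab2 ?ba1 ?ba2 ?(mul0l Hbi) ?(mul0r Hbi). zmodr.
have H1 := HD e (b - e) (- e). rewrite X1 in H1.
have H2 := HD a (b - e) (- e). rewrite X2 in H2.
have Zt : cm (cm t (b - e)) (- e) = 0.
  by rewrite (commDr t b (- e)) (commNr t e) K2' Kt' subrr comm0l.
have HX : a + b - cm a b = cm (cm (e + a) (b - e)) (- e).
  rewrite /comm; dist.
  repeat progress rewrite ?He ?a1 ?a2 ?b1 ?b2 ?ab1 ?ab2 ?ba1 ?ba2 ?(mul0l Hbi) ?(mul0r Hbi). zmodr.
have Pab : P21 (cm a b) := P21_add (m12_12 ha hb) (P21_opp (m12_12 hb ha)).
have M1 := Mixed (P12_add ha hb) (P21_opp Pab).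
have M2 := Mixed ha (P21_opp Pab).
have E : D (a + b - cm a b) = D b + D (a - cm a b).
  rewrite HX (HD (e + a) (b - e) (- e)) ht.
  have hh := f_equal2 (fun p q => p - q) (f_equal2 (fun p q => p + q) H1 H2) Zt.
  move: hh; rewrite /comm; dist; move=> hh. lin hh.
rewrite M1 M2 in E. lin E.
Qed.

End Lie.

Section Lie2.
Variables (R : zmodType) (mul : R -> R -> R).
Hypothesis Hbi : biadditive mul.
Hypothesis Halt : alternative mul.
Hypothesis Hprime : prime_ring mul.
Variable e : R.
Hypothesis He : mul e e = e.
Variable D : R -> R.
Hypothesis HD : mult_Lie3_derivation mul D.
Local Notation "x ⊙ y" := (mul x y) (at level 40, left associativity).
Local Notation A := (associator mul).
Local Notation cm := (comm mul).
Local Notation T := (Tdef D).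
Local Ltac dist := repeat progress rewrite ?(mulDl Hbi) ?(mulDr Hbi) ?(mulNl Hbi) ?(mulNr Hbi) ?(mul0l Hbi) ?(mul0r Hbi).
Local Notation P11 := (P11 mul e).
Local Notation P12 := (P12 mul e).
Local Notation P21 := (P21 mul e).
Local Notation P22 := (P22 mul e).
Local Notation I2 := (I2 Hbi Halt He).
Local Notation I3 := (I3 Hbi Halt He).
Local Notation eeL := (eeL Hbi Halt He).
Local Notation eeR := (eeR Hbi Halt He).
Local Notation eflex := (eflex Hbi Halt He).
Local Notation m11_11 := (m11_11 Hbi Halt He).
Local Notation m11_12 := (m11_12 Hbi Halt He).
Local Notation m12_12 := (m12_12 Hbi Halt He).
Local Notation m12_21 := (m12_21 Hbi Halt He).
Local Notation m12_22 := (m12_22 Hbi Halt He).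
Local Notation m21_11 := (m21_11 Hbi Halt He).
Local Notation m21_12 := (m21_12 Hbi Halt He).
Local Notation m21_21 := (m21_21 Hbi Halt He).
Local Notation m22_21 := (m22_21 Hbi Halt He).
Local Notation m22_22 := (m22_22 Hbi Halt He).
Local Notation m11_21 := (m11_21 Hbi Halt He).
Local Notation m11_22 := (m11_22 Hbi Halt He).
Local Notation m12_11 := (m12_11 Hbi Halt He).
Local Notation m22_11 := (m22_11 Hbi Halt He).
Local Notation m22_12 := (m22_12 Hbi Halt He).
Local Notation m21_22 := (m21_22 Hbi Halt He).
Local Notation sq12 := (sq12 Hbi Halt He).
Local Notation sq21 := (sq21 Hbi Halt He).
Local Notation P11_0 := (P11_0 Hbi Halt He).
Local Notation P12_0 := (P12_0 Hbi Halt He).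
Local Notation P21_0 := (P21_0 Hbi Halt He).
Local Notation P22_0 := (P22_0 Hbi Halt He).
Local Notation P11_add := (P11_add Hbi Halt He).
Local Notation P12_add := (P12_add Hbi Halt He).
Local Notation P21_add := (P21_add Hbi Halt He).
Local Notation P22_add := (P22_add Hbi Halt He).
Local Notation P11_opp := (P11_opp Hbi Halt He).
Local Notation P12_opp := (P12_opp Hbi Halt He).
Local Notation P21_opp := (P21_opp Hbi Halt He).
Local Notation P22_opp := (P22_opp Hbi Halt He).
Local Notation c11P := (c11P Hbi Halt He).
Local Notation c12P := (c12P Hbi Halt He).
Local Notation c21P := (c21P Hbi Halt He).
Local Notation c22P := (c22P Hbi Halt He).
Local Notation cdec := (cdec Hbi Halt He).
Local Notation sep11_22 := (sep11_22 Hbi Halt He).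
Local Notation sep12_21 := (sep12_21 Hbi Halt He).
Local Notation comm12e := (comm12e Hbi Halt He).
Local Notation comm21e := (comm21e Hbi Halt He).
Local Notation comm11e := (comm11e Hbi Halt He).
Local Notation comm22e := (comm22e Hbi Halt He).
Local Notation commxe := (commxe Hbi Halt He).
Local Notation Pform := (Pform Hbi Halt He).
Local Notation K_of_P0 := (K_of_P0 Hbi Halt He).
Local Notation K_split := (K_split Hbi Halt He).
Local Notation commDl := (commDl Hbi Halt).
Local Notation commDr := (commDr Hbi Halt).
Local Notation commNl := (commNl Hbi Halt).
Local Notation commNr := (commNr Hbi Halt).
Local Notation comm0l := (comm0l Hbi Halt).
Local Notation comm0r := (comm0r Hbi Halt).
Local Notation commA := (commA Hbi Halt).
Local Notation Kdec := (Kdec Hbi Halt He).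
Local Notation K_comm21 := (K_comm21 Hbi Halt He).
Local Notation K_comm12 := (K_comm12 Hbi Halt He).
Local Notation K_comm11 := (K_comm11 Hbi Halt He).
Local Notation K_comm22 := (K_comm22 Hbi Halt He).
Local Notation comm12_21_K := (comm12_21_K Hbi Halt He).
Local Notation PC2 := (PC2 Hbi Halt Hprime He).
Local Notation Jid := (Jid Hbi Halt).
Local Notation Jswap := (Jswap Hbi Halt).
Local Ltac cdist := repeat progress rewrite ?commDl ?commDr ?commNl ?commNr ?comm0l ?comm0r.

Local Notation Mixed := (Mixed Hbi Halt Hprime He HD).
Local Notation eqvF := (eqvF Hbi Halt Hprime He HD).

Lemma Pure21 a b : P21 a -> P21 b -> D (a + b) = D a + D b.
Proof.
move=> [a1 a2] [b1 b2].
exact: (@Pure12 R (op mul) (op_bi Hbi) (op_alt Halt) (op_prime Hprime) e He D (op_Lie3 Hbi Halt HD) a b (conj a2 a1) (conj b2 b1)).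
Qed.

Lemma SA p q p' q' : P12 p -> P21 q -> P12 p' -> P21 q' -> T (p + q) (p' + q') = 0.
Proof.
move=> hp hq hp' hq'. rewrite /Tdef.
have E : p + q + (p' + q') = (p + p') + (q + q') by zmodr.
rewrite E (Mixed (P12_add hp hp') (P21_add hq hq')) (Pure12 Hbi Halt Hprime He HD hp hp') (Pure21 hq hq').
rewrite (Mixed hp hq) (Mixed hp' hq'). zmodr.
Qed.

Lemma StepA a b : cm (T a b) e = 0.
Proof.
apply: K_of_P0. rewrite -eqvF (Pform a) (Pform b).
exact: SA (c12P a) (c21P a) (c12P b) (c21P b).
Qed.

End Lie2.

Section Cent.
Variables (R : zmodType) (mul : R -> R -> R).
Hypothesis Hbi : biadditive mul.
Hypothesis Halt : alternative mul.
Hypothesis Hprime : prime_ring mul.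
Variable e : R.
Hypothesis He : mul e e = e.
Hypothesis Hne : e <> 0.
Hypothesis Hnt : ~ is_mult_identity mul e.
Local Notation "x ⊙ y" := (mul x y) (at level 40, left associativity).
Local Notation A := (associator mul).
Local Notation cm := (comm mul).
Local Ltac dist := repeat progress rewrite ?(mulDl Hbi) ?(mulDr Hbi) ?(mulNl Hbi) ?(mulNr Hbi) ?(mul0l Hbi) ?(mul0r Hbi).
Local Notation P11 := (P11 mul e).
Local Notation P12 := (P12 mul e).
Local Notation P21 := (P21 mul e).
Local Notation P22 := (P22 mul e).
Local Notation I2 := (I2 Hbi Halt He).
Local Notation I3 := (I3 Hbi Halt He).
Local Notation eeL := (eeL Hbi Halt He).
Local Notation eeR := (eeR Hbi Halt He).
Local Notation eflex := (eflex Hbi Halt He).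
Local Notation m11_11 := (m11_11 Hbi Halt He).
Local Notation m11_12 := (m11_12 Hbi Halt He).
Local Notation m12_12 := (m12_12 Hbi Halt He).
Local Notation m12_21 := (m12_21 Hbi Halt He).
Local Notation m12_22 := (m12_22 Hbi Halt He).
Local Notation m21_11 := (m21_11 Hbi Halt He).
Local Notation m21_12 := (m21_12 Hbi Halt He).
Local Notation m21_21 := (m21_21 Hbi Halt He).
Local Notation m22_21 := (m22_21 Hbi Halt He).
Local Notation m22_22 := (m22_22 Hbi Halt He).
Local Notation m11_21 := (m11_21 Hbi Halt He).
Local Notation m11_22 := (m11_22 Hbi Halt He).
Local Notation m12_11 := (m12_11 Hbi Halt He).
Local Notation m22_11 := (m22_11 Hbi Halt He).
Local Notation m22_12 := (m22_12 Hbi Halt He).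
Local Notation m21_22 := (m21_22 Hbi Halt He).
Local Notation sq12 := (sq12 Hbi Halt He).
Local Notation sq21 := (sq21 Hbi Halt He).
Local Notation P11_0 := (P11_0 Hbi Halt He).
Local Notation P12_0 := (P12_0 Hbi Halt He).
Local Notation P21_0 := (P21_0 Hbi Halt He).
Local Notation P22_0 := (P22_0 Hbi Halt He).
Local Notation P11_add := (P11_add Hbi Halt He).
Local Notation P12_add := (P12_add Hbi Halt He).
Local Notation P21_add := (P21_add Hbi Halt He).
Local Notation P22_add := (P22_add Hbi Halt He).
Local Notation P11_opp := (P11_opp Hbi Halt He).
Local Notation P12_opp := (P12_opp Hbi Halt He).
Local Notation P21_opp := (P21_opp Hbi Halt He).
Local Notation P22_opp := (P22_opp Hbi Halt He).
Local Notation c11P := (c11P Hbi Halt He).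
Local Notation c12P := (c12P Hbi Halt He).
Local Notation c21P := (c21P Hbi Halt He).
Local Notation c22P := (c22P Hbi Halt He).
Local Notation cdec := (cdec Hbi Halt He).
Local Notation sep11_22 := (sep11_22 Hbi Halt He).
Local Notation sep12_21 := (sep12_21 Hbi Halt He).
Local Notation comm12e := (comm12e Hbi Halt He).
Local Notation comm21e := (comm21e Hbi Halt He).
Local Notation comm11e := (comm11e Hbi Halt He).
Local Notation comm22e := (comm22e Hbi Halt He).
Local Notation commxe := (commxe Hbi Halt He).
Local Notation Pform := (Pform Hbi Halt He).
Local Notation K_of_P0 := (K_of_P0 Hbi Halt He).
Local Notation K_split := (K_split Hbi Halt He).
Local Notation commDr := (commDr Hbi Halt).
Local Notation commA := (commA Hbi Halt).
Local Notation Kdec := (Kdec Hbi Halt He).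
Local Notation K_comm11 := (K_comm11 Hbi Halt He).
Local Notation K_comm22 := (K_comm22 Hbi Halt He).
Local Notation decomp4 := (decomp4 Hbi Halt Hprime He).
Local Notation Jid := (Jid Hbi Halt).
Local Notation J0 := (J0 Hbi Halt).
Local Notation cyc := (A_cyc Hbi Halt).

Lemma Cent t : cm t e = 0 -> (forall x, P12 x -> cm t x = 0) -> (forall y, P21 y -> cm t y = 0) ->
  forall r, cm t r = 0.
Proof.
move=> Ke K12 K21 r.
have K12' x : P12 x -> cm x t = 0 by move=> hx; rewrite commA K12 // oppr0.
have K21' y : P21 y -> cm y t = 0 by move=> hy; rewrite commA K21 // oppr0.
have [r1 [r2 [r3 [r4 [h1 [h2 [h3 [h4 ->]]]]]]]] := decomp4 r.
rewrite !commDr (K12 _ h2) (K21 _ h3) addr0 addr0.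
have [t1 [t4 [ht1 [ht4 Et]]]] := Kdec Ke.
have Z1 : cm r1 t = 0.
  apply: (PC1 Hbi Halt Hprime He Hnt (K_comm11 Ke h1)).
  - move=> x hx. have J := Jid r1 x t.
    rewrite (K12' _ (m11_12 h1 hx)) (K12' _ hx) (mul0r Hbi) subr0 add0r in J.
    have A0 : A r1 x t = 0.
      rewrite cyc /associator Et; dist.
      rewrite (m12_11 hx ht1) (m22_11 ht4 h1) (m12_11 (m12_22 hx ht4) h1) (m12_11 hx (m11_11 ht1 h1)).
      repeat progress rewrite ?(mul0l Hbi) ?(mul0r Hbi). zmodr.
    move: J; rewrite (J0 A0) => /eqP; rewrite oppr_eq0 => /eqP //.
  - move=> y hy. have J := Jid y r1 t.
    rewrite (K21' _ (m21_11 hy h1)) (K21' _ hy) (mul0l Hbi) subr0 add0r in J.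
    have A0 : A y r1 t = 0.
      rewrite cyc /associator Et; dist.
      rewrite (m11_22 h1 ht4) (m11_21 ht1 hy) (m11_21 (m11_11 h1 ht1) hy) (m11_21 h1 (m22_21 ht4 hy)).
      repeat progress rewrite ?(mul0l Hbi) ?(mul0r Hbi). zmodr.
    move: J; rewrite (J0 A0) => /eqP; rewrite oppr_eq0 => /eqP //.
have Z4 : cm r4 t = 0.
  apply: (PC1' Hbi Halt Hprime He Hne (K_comm22 Ke h4)).
  - move=> x hx. have J := Jid x r4 t.
    rewrite (K12' _ (m12_22 hx h4)) (K12' _ hx) (mul0l Hbi) subr0 add0r in J.
    have A0 : A x r4 t = 0.
      rewrite cyc /associator Et; dist.
      rewrite (m22_11 h4 ht1) (m22_12 ht4 hx) (m22_12 (m22_22 h4 ht4) hx) (m22_12 h4 (m11_12 ht1 hx)).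
      repeat progress rewrite ?(mul0l Hbi) ?(mul0r Hbi). zmodr.
    move: J; rewrite (J0 A0) => /eqP; rewrite oppr_eq0 => /eqP //.
  - move=> y hy. have J := Jid r4 y t.
    rewrite (K21' _ (m22_21 h4 hy)) (K21' _ hy) (mul0r Hbi) subr0 add0r in J.
    have A0 : A r4 y t = 0.
      rewrite cyc /associator Et; dist.
      rewrite (m21_22 hy ht4) (m11_22 ht1 h4) (m21_22 (m21_11 hy ht1) h4) (m21_22 hy (m22_22 ht4 h4)).
      repeat progress rewrite ?(mul0l Hbi) ?(mul0r Hbi). zmodr.
    move: J; rewrite (J0 A0) => /eqP; rewrite oppr_eq0 => /eqP //.
rewrite (commA r1 t) Z1 (commA r4 t) Z4. zmodr.
Qed.

End Cent.

Unset Implicit Arguments.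

Theorem corollary2p8 (R : zmodType) (mul : R -> R -> R)
  (Hbi : biadditive mul) (Halt : alternative mul)
  (H3 : three_torsion_free R) (Hprime : prime_ring mul)
  (e1 : R) (He1 : nontrivial_idempotent mul e1)
  (D : R -> R) (HD : mult_Lie3_derivation mul D) :
  forall a b : R, in_center mul (D (a + b) - D a - D b).
Proof.
move=> a b x.
have [en0 [He hnid]] := He1.
have St : forall f, mul f f = f -> comm mul (Tdef D a b) f = 0.
  move=> f hf. exact: (StepA Hbi Halt Hprime hf HD a b).
have Ke := St e1 He.
have K12 : forall c, P12 mul e1 c -> comm mul (Tdef D a b) c = 0.
  move=> c hc. have [c1 c2] := hc.
  have hf : mul (e1 + c) (e1 + c) = e1 + c.
    rewrite (mulDl Hbi) !(mulDr Hbi) He c1 c2 (sq12 Hbi Halt He hc). zmodr.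
  have := St _ hf. by rewrite (commDr Hbi Halt) Ke add0r.
have K21 : forall c, P21 mul e1 c -> comm mul (Tdef D a b) c = 0.
  move=> c hc. have [c1 c2] := hc.
  have hf : mul (e1 + c) (e1 + c) = e1 + c.
    rewrite (mulDl Hbi) !(mulDr Hbi) He c1 c2 (sq21 Hbi Halt He hc). zmodr.
  have := St _ hf. by rewrite (commDr Hbi Halt) Ke add0r.
exact: (Cent Hbi Halt Hprime He en0 hnid Ke K12 K21 x).
Qed.
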